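(* Assume $\theta_i<1$ for all $i$ and $\theta_j>0$ for some $j$. Suppose $\mathcal G(C)$ is a star topology with center node $l$ and $0<\theta_l<1$. Then: (i) every equilibrium social power $x^*$ of systems (A) and (B) satisfies: (a) $x^*\in\operatorname{int}\Delta_n$; (b) for $i\in\mathcal V_f$: if $C_{li}=0$ then $x^*_i=1/n$, otherwise $x^*_i>1/n$; (c) for $i\in\mathcal V_p\setminus\{l\}$ with $C_{li}=0$: $x^*_i=\dfrac{n-\sqrt{n^2-4n\theta_i(1-\theta_i)}}{2n\theta_i}$ (in particular $x^*_i$ is the same for all equilibria), and this value is strictly decreasing in $\theta_i$. (ii) If moreover $C_{li}=0$ for all $i\in\mathcal V_p\setminus\{l\}$, then the equilibrium social power is unique and satisfies: (a) $x^*_i=\dfrac{n-\sqrt{n^2-4n\theta_i(1-\theta_i)}}{2n\theta_i}$, strictly decreasing in $\theta_i$, for $i\in\mathcal V_p\setminus\{l\}$; (b) $x^*_l=\dfrac{n-\sqrt{n^2-4n\theta_l(1-\theta_l)\xi^*}}{2n\theta_l}$; (c) $x^*_i=\dfrac1n+\Big(\dfrac{\xi^*}{n}-x^*_l\Big)C_{li}$ for $i\in\mathcal V_f$; where $\xi^*=n-r-n\sum_{j\in\mathcal V_p\setminus\{l\}}x^*_j$ and $r=|\mathcal V_f|$.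
   Context: Let $n\ge 2$, $\mathbf 1_n$ the all-ones vector, $I_n$ the identity matrix, $\Delta_n=\{x\in\mathbb R^n: x\ge 0,\ \mathbf 1_n^Tx=1\}$, $\operatorname{int}\Delta_n=\{x\in\mathbb R^n: x>0,\ \mathbf 1_n^Tx=1\}$. Let $C\in\mathbb R^{n\times n}$ be a nonnegative row-stochastic matrix with zero diagonal, and $\mathcal G(C)$ the digraph on $\{1,\dots,n\}$ with an edge $(i,j)$ iff $C_{ij}>0$. $\mathcal G(C)$ is a star topology with center node $l$ if every edge of $\mathcal G(C)$ is either from $l$ or to $l$ (i.e. $C_{ij}>0$ implies $i=l$ or $j=l$). Let $\theta=(\theta_1,\dots,\theta_n)\in[0,1]^n$, $\Theta=\mathrm{diag}(\theta)$, $W(x)=\mathrm{diag}(x)+(I_n-\mathrm{diag}(x))C$. Let $\mathcal V_f=\{i:\theta_i=0\}$ and $\mathcal V_p=\{i:\theta_i>0\}$. System (A): $x(s+1)=F(x(s))$, $x(0)\in\Delta_n$, where $F(x)=(I_n-\Theta)(I_n-W(x)^T\Theta)^{-1}\mathbf 1_n/n$; an equilibrium is $x^*\in\Delta_n$ with $F(x^* )=x^*$. System (B): $V(k+1)=\Theta W(x(k))V(k)+I_n-\Theta$, $x(k+1)=V(k+1)^T\mathbf 1_n/n$, with $V(0)=I_n$, $x(0)\in\Delta_n$; an equilibrium is a pair $(V^*,x^* )$ with $V^*$ row-stochastic, $x^*\in\Delta_n$, $V^*=\Theta W(x^* )V^*+I_n-\Theta$, $x^*=(V^* )^T\mathbf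 1_n/n$. The equilibrium social powers of (A) and (B) coincide (the fixed points of $F$). *)

(* Defs.v *)
(* Real numbers are modelled by an arbitrary real closed
   field R : rcfType (all notions involved are algebraic: matrices, matrix
   inverse, square roots, order), which is more general than the reals. *)
From HB Require Import structures.
From mathcomp Require Import all_boot all_order all_algebra.
Set Implicit Arguments. Unset Strict Implicit. Unset Printing Implicit Defensive.
Import Order.TTheory GRing.Theory Num.Theory.
Local Open Scope ring_scope.

Section Defs.
Variable R : rcfType.
Variable n : nat.

Definition in_simplex (x : 'cV[R]_n) : Prop :=
  (forall i, 0 <= x i ord0) /\ \sum_i x i ord0 = 1.

Definition in_int_simplex (x : 'cV[R]_n) : Prop :=
  (forall i, 0 < x i ord0) /\ \sum_i x i ord0 = 1.

Definition nonneg_mx (A : 'M[R]_n) : Prop := forall i j, 0 <= A i j.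

Definition row_stochastic (A : 'M[R]_n) : Prop :=
  nonneg_mx A /\ forall i, \sum_j A i j = 1.

Definition zero_diag (A : 'M[R]_n) : Prop := forall i, A i i = 0.

Definition star_topology (C : 'M[R]_n) (l : 'I_n) : Prop :=
  forall i j, 0 < C i j -> i = l \/ j = l.

Definition Theta (theta : 'rV[R]_n) : 'M[R]_n := diag_mx theta.

Definition Wmx (C : 'M[R]_n) (x : 'cV[R]_n) : 'M[R]_n :=
  diag_mx x^T + (1%:M - diag_mx x^T) *m C.

Definition one_n : 'cV[R]_n := const_mx (n%:R^-1).

Definition Fmap (C : 'M[R]_n) (theta : 'rV[R]_n) (x : 'cV[R]_n) : 'cV[R]_n :=
  (1%:M - Theta theta) *m invmx (1%:M - (Wmx C x)^T *m Theta theta) *m one_n.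

(* equilibrium of system (A): x in Delta_n with F(x) = x
   (F(x) being defined, i.e. the matrix I - W(x)^T Theta invertible) *)
Definition equilibrium_A (C : 'M[R]_n) (theta : 'rV[R]_n) (x : 'cV[R]_n) : Prop :=
  in_simplex x /\
  (1%:M - (Wmx C x)^T *m Theta theta) \in unitmx /\
  Fmap C theta x = x.

Definition equilibrium_B (C : 'M[R]_n) (theta : 'rV[R]_n)
    (V : 'M[R]_n) (x : 'cV[R]_n) : Prop :=
  row_stochastic V /\ in_simplex x /\
  V = Theta theta *m Wmx C x *m V + (1%:M - Theta theta) /\
  x = V^T *m one_n.

Definition equilibrium_power (C : 'M[R]_n) (theta : 'rV[R]_n) (x : 'cV[R]_n) : Prop :=
  equilibrium_A C theta x \/ exists V, equilibrium_B C theta V x.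

Definition root_val (t s : R) : R :=
  (n%:R - Num.sqrt (n%:R ^+ 2 - 4%:R * n%:R * t * (1 - t) * s)) / (2%:R * n%:R * t).

Definition gval (t : R) : R := root_val t 1.

End Defs.

(* Main.v *)
Require Import Defs.
From HB Require Import structures.
From mathcomp Require Import all_boot all_order all_algebra.
From mathcomp Require Import ring lra.
Import Order.TTheory GRing.Theory Num.Theory.
Local Open Scope ring_scope.

Lemma root_val_eq (R : rcfType) (n : nat) (t s : R) :
  (0 < n)%N -> 0 < t ->
  0 <= n%:R ^+ 2 - 4%:R * n%:R * t * (1 - t) * s ->
  let y := root_val n t s in
  n%:R * t * y ^+ 2 - n%:R * y + (1 - t) * s = 0 /\ 2%:R * t * y <= 1.
Proof.
move=> n0 t0 D0 y.
have N0 : (0 : R) < n%:R by rewrite ltr0n.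
set D := _ - _ in D0.
have q2 := sqr_sqrtr D0.
have q0 := sqrtr_ge0 D.
set q := Num.sqrt D in q2 q0.
have -> : y = (n%:R - q) / (2%:R * n%:R * t) by [].
have Nt : n%:R * t != 0 :> R by rewrite mulf_neq0 // ?gt_eqF.
have Nt2 : 2%:R * n%:R * t != 0 :> R by rewrite -mulrA mulf_neq0 // ?pnatr_eq0.
split.
  have -> : n%:R * t * ((n%:R - q) / (2%:R * n%:R * t)) ^+ 2 -
    n%:R * ((n%:R - q) / (2%:R * n%:R * t)) + (1 - t) * s =
    (q ^+ 2 - D) / (4%:R * n%:R * t).
    rewrite /D; field.
    by rewrite !gt_eqF.
  by rewrite q2 subrr mul0r.
have -> : 2%:R * t * ((n%:R - q) / (2%:R * n%:R * t)) = 1 - q / n%:R.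
  by field; rewrite !gt_eqF.
by rewrite lerBlDr lerDl divr_ge0 // ltW.
Qed.

Lemma root_val_uniq (R : rcfType) (n : nat) (t s y : R) :
  (0 < n)%N -> 0 < t ->
  n%:R * t * y ^+ 2 - n%:R * y + (1 - t) * s = 0 -> 2%:R * t * y <= 1 ->
  y = root_val n t s.
Proof.
move=> n0 t0 E le1.
have N0 : (0 : R) < n%:R by rewrite ltr0n.
rewrite /root_val.
have -> : n%:R ^+ 2 - 4%:R * n%:R * t * (1 - t) * s = (n%:R * (1 - 2%:R * t * y)) ^+ 2.
  have E' : (1 - t) * s = n%:R * y - n%:R * t * y ^+ 2.
    by apply/eqP; rewrite -subr_eq0; apply/eqP; rewrite -E; ring.
  have -> : n%:R ^+ 2 - 4%:R * n%:R * t * (1 - t) * s =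
    n%:R ^+ 2 - 4%:R * n%:R * t * ((1 - t) * s) by ring.
  rewrite E'; ring.
rewrite sqrtr_sqr ger0_norm; last by apply: mulr_ge0; [exact: ltW | rewrite subr_ge0].
by field; rewrite !gt_eqF.
Qed.

Lemma gval_props (R : rcfType) (n : nat) (t : R) :
  (2 <= n)%N -> 0 < t -> t < 1 ->
  let g := gval n t in
  n%:R * t * g ^+ 2 - n%:R * g + (1 - t) = 0 /\ 2%:R * t * g <= 1 /\
  0 < g /\ n%:R * g < 1.
Proof.
move=> n2 t0 t1 g.
have N2 : (2 : R) <= n%:R by rewrite (ler_nat R 2 n).
have n0 : (0 < n)%N by apply: leq_trans n2.
have D0 : 0 <= n%:R ^+ 2 - 4%:R * n%:R * t * (1 - t) * 1 :> R.
  have h : 0 <= (1 - 2 * t) ^+ 2 :> R by apply: sqr_ge0.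
  nra.
have [E le1] := root_val_eq R n t 1 n0 t0 D0.
rewrite mulr1 in E.
have Hg : 0 < g.
  rewrite /g /gval; set y := root_val _ _ _ in E le1 *.
  have E2 : (n%:R * y) * (1 - t * y) = 1 - t.
    by rewrite -[RHS]subr0 -E; ring.
  rewrite ltNge; apply/negP => hy.
  have h1 : 0 <= 1 - t * y by nra.
  have h2 : n%:R * y <= 0 by nra.
  have : (n%:R * y) * (1 - t * y) <= 0 by rewrite mulr_le0_ge0.
  lra.
split => //; split => //; split => //.
have h : (n%:R * g - 1) * (n%:R - t * n%:R * g - t) = t * (1 - n%:R).
  rewrite /g /gval; set y := root_val _ _ _ in E le1 *.
  have E' : n%:R * y - n%:R * t * y ^+ 2 = 1 - t.
    by rewrite -[RHS]subr0 -E; ring.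
  transitivity (n%:R * (n%:R * y - n%:R * t * y ^+ 2) - n%:R + t); first by ring.
  by rewrite E'; ring.
move: h le1; rewrite /g /gval; set y := root_val _ _ _ => h le1.
have h3 : 0 <= n%:R * (1 - 2%:R * t * y) by apply: mulr_ge0; lra.
have h4 : 0 < n%:R - t * n%:R * y - t by lra.
rewrite ltNge; apply/negP => hy.
have : 0 <= (n%:R * y - 1) * (n%:R - t * n%:R * y - t).
  by apply: mulr_ge0; lra.
rewrite h. nra.
Qed.

Lemma gval_mono (R : rcfType) (n : nat) (t1 t2 : R) :
  (2 <= n)%N -> 0 < t1 -> t1 < t2 -> t2 < 1 -> gval n t2 < gval n t1.
Proof.
move=> n2 h1 h12 h2.
have N2 : (2 : R) <= n%:R by rewrite (ler_nat R 2 n).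
have [E1 [l1 [p1 q1]]] := gval_props R n t1 n2 h1 (lt_trans h12 h2).
have [E2 [l2 [p2 q2]]] := gval_props R n t2 n2 (lt_trans h1 h12) h2.
move: E1 l1 p1 q1 E2 l2 p2 q2.
set g1 := gval n t1; set g2 := gval n t2 => E1 l1 p1 q1 E2 l2 p2 q2.
rewrite ltNge; apply/negP => hg.
have a1 : n%:R * g1 ^+ 2 < 1.
  have : n%:R * g1 * g1 < g1 by rewrite -[X in _ < X]mul1r ltr_pM2r.
  have : g1 < 1 by nra.
  rewrite expr2 mulrA; lra.
have a2 : 0 < (t2 - t1) * (1 - n%:R * g1 ^+ 2) by apply: mulr_gt0; lra.
have a3 : 0 < 1 - t2 * (g1 + g2).
  have : t2 * g1 < g1 by rewrite -[X in _ < X]mul1r ltr_pM2r.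
  have : g1 <= 1 / 2 by nra.
  lra.
have a4 : 0 <= (n%:R * (g2 - g1)) * (1 - t2 * (g1 + g2)).
  by apply: mulr_ge0; [apply: mulr_ge0; lra | lra].
have e : n%:R * t2 * g1 ^+ 2 - n%:R * g1 + (1 - t2) =
   (n%:R * t2 * g2 ^+ 2 - n%:R * g2 + (1 - t2))
   + (n%:R * (g2 - g1)) * (1 - t2 * (g1 + g2)) by ring.
have e2 : n%:R * t2 * g1 ^+ 2 - n%:R * g1 + (1 - t2) =
   (n%:R * t1 * g1 ^+ 2 - n%:R * g1 + (1 - t1))
   - (t2 - t1) * (1 - n%:R * g1 ^+ 2) by ring.
rewrite E2 add0r in e; rewrite E1 sub0r in e2.
lra.
Qed.

Lemma W_entry (R : rcfType) (n : nat) (C : 'M[R]_n) (x : 'cV[R]_n) j i :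
  Wmx C x j i = x j ord0 *+ (j == i) + (1 - x j ord0) * C j i.
Proof.
rewrite /Wmx; have -> : (1%:M - diag_mx x^T) = diag_mx (\row_k (1 - x k ord0)) :> 'M[R]_n.
  apply/matrixP => a b; rewrite !mxE.
  by case: (a == b); rewrite ?mulr1n ?mulr0n ?subr0.
by rewrite mul_diag_mx !mxE.
Qed.

Lemma M_entry (R : rcfType) (n : nat) (C : 'M[R]_n) (theta : 'rV[R]_n)
   (x z : 'cV[R]_n) i :
  ((1%:M - (Wmx C x)^T *m Theta theta) *m z) i ord0 =
  z i ord0 - \sum_j Wmx C x j i * theta ord0 j * z j ord0.
Proof.
rewrite mulmxBl mul1mx /Theta mul_mx_diag !mxE; congr (_ - _).
by apply: eq_bigr => j _; rewrite !mxE.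
Qed.

Lemma IT_entry (R : rcfType) (n : nat) (theta : 'rV[R]_n) (z : 'cV[R]_n) i :
  ((1%:M - Theta theta) *m z) i ord0 = (1 - theta ord0 i) * z i ord0.
Proof. by rewrite mulmxBl mul1mx /Theta mul_diag_mx !mxE mulrBl mul1r. Qed.

Lemma W_rowsum (R : rcfType) (n : nat) (C : 'M[R]_n) (x : 'cV[R]_n) j :
  row_stochastic C -> \sum_i Wmx C x j i = 1.
Proof.
move=> [_ hC].
under eq_bigr do rewrite W_entry.
rewrite big_split /= -mulr_sumr hC mulr1.
rewrite (bigD1 j) //= eqxx mulr1n big1 ?addr0; first by rewrite addrC subrK.
by move=> k /negbTE; rewrite eq_sym => ->; rewrite mulr0n.
Qed.

Lemma W_ge0 (R : rcfType) (n : nat) (C : 'M[R]_n) (x : 'cV[R]_n) j i :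
  row_stochastic C -> 0 <= x j ord0 <= 1 -> 0 <= Wmx C x j i.
Proof.
move=> [hC _] /andP[x0 x1]; rewrite W_entry addr_ge0 ?mulrn_wge0 //.
by rewrite mulr_ge0 ?subr_ge0.
Qed.

Lemma sumeq1 (R : rcfType) (n : nat) (C : 'M[R]_n) (theta : 'rV[R]_n)
   (x z : 'cV[R]_n) :
  (0 < n)%N -> row_stochastic C ->
  (forall i, z i ord0 - \sum_j Wmx C x j i * theta ord0 j * z j ord0 = n%:R^-1) ->
  \sum_i (1 - theta ord0 i) * z i ord0 = 1.
Proof.
move=> n0 hC E.
have : \sum_i (z i ord0 - \sum_j Wmx C x j i * theta ord0 j * z j ord0) = 1.
  under eq_bigr do rewrite E.
  rewrite sumr_const card_ord -[_ *+ _]mulr_natr mulVf //.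
  by rewrite pnatr_eq0 -lt0n.
rewrite sumrB exchange_big /=.
have -> : \sum_j \sum_i Wmx C x j i * theta ord0 j * z j ord0 =
    \sum_j theta ord0 j * z j ord0.
  by apply: eq_bigr => j _; rewrite -!mulr_suml W_rowsum // mul1r.
move=> h; rewrite -[RHS]h -sumrB; apply: eq_bigr => i _; ring.
Qed.

Lemma ker_M (R : rcfType) (n : nat) (C : 'M[R]_n) (theta : 'rV[R]_n)
   (x : 'cV[R]_n) (i0 : 'I_n) (u : 'rV[R]_n) :
  row_stochastic C -> (forall i, 0 <= x i ord0 <= 1) ->
  (forall i, 0 <= theta ord0 i) -> (forall i, theta ord0 i < 1) ->
  u *m (1%:M - (Wmx C x)^T *m Theta theta) = 0 -> u = 0.
Proof.
move=> hC hx th0 th1 E.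
have Ek k : u ord0 k = (\sum_i u ord0 i * Wmx C x k i) * theta ord0 k.
  move/matrixP: E => /(_ ord0 k).
  rewrite mulmxBr mulmx1 mulmxA /Theta mul_mx_diag !mxE => /eqP.
  rewrite subr_eq0 => /eqP ->; congr (_ * _).
  by apply: eq_bigr => i _; rewrite !mxE.
have [k _ Hk] := @arg_maxP _ _ _ i0 xpredT (fun i => `|u ord0 i|) isT.
have Hle : `|u ord0 k| <= theta ord0 k * `|u ord0 k|.
  rewrite {1}Ek normrM (ger0_norm (th0 k)) mulrC ler_wpM2l //.
  apply: le_trans (ler_norm_sum _ _ _) _.
  apply: le_trans (_ : \sum_i `|u ord0 k| * Wmx C x k i <= _).
    apply: ler_sum => i _; rewrite normrM (ger0_norm (@W_ge0 R n C x k i hC (hx k))).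
    by rewrite ler_wpM2r ?(@W_ge0 R n C x k i hC (hx k)) //; apply: Hk.
  by rewrite -mulr_sumr W_rowsum // mulr1.
have Hk0 : `|u ord0 k| <= 0.
  have := th1 k; have := normr_ge0 (u ord0 k); nra.
apply/matrixP => a b; rewrite (ord1 a) mxE; apply/eqP; rewrite -normr_le0.
by apply: le_trans (Hk b isT) Hk0.
Qed.

Lemma unit_M (R : rcfType) (n : nat) (C : 'M[R]_n) (theta : 'rV[R]_n)
   (x : 'cV[R]_n) (i0 : 'I_n) :
  row_stochastic C -> (forall i, 0 <= x i ord0 <= 1) ->
  (forall i, 0 <= theta ord0 i) -> (forall i, theta ord0 i < 1) ->
  (1%:M - (Wmx C x)^T *m Theta theta) \in unitmx.
Proof.
move=> hC hx th0 th1.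
rewrite -row_free_unit -kermx_eq0 -submx0; apply/row_subP => i.
have /sub_kermxP := row_sub i (kermx (1%:M - (Wmx C x)^T *m Theta theta)).
by move/(@ker_M R n C theta x i0 _ hC hx th0 th1) ->; rewrite sub0mx.
Qed.

Definition eqs (R : rcfType) (n : nat) (C : 'M[R]_n) (theta : 'rV[R]_n)
   (x z : 'cV[R]_n) : Prop :=
  (forall i, z i ord0 - \sum_j Wmx C x j i * theta ord0 j * z j ord0 = n%:R^-1)
  /\ (forall i, x i ord0 = (1 - theta ord0 i) * z i ord0).
Arguments eqs {R n}.

Lemma simplex_bnd (R : rcfType) (n : nat) (x : 'cV[R]_n) :
  in_simplex x -> forall i, 0 <= x i ord0 <= 1.
Proof.
move=> [h0 h1] i; rewrite h0 /= -h1 (bigD1 i) //= lerDl.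
by apply: sumr_ge0 => j _.
Qed.

Lemma Mz_eq (R : rcfType) (n : nat) (C : 'M[R]_n) (theta : 'rV[R]_n)
   (x z : 'cV[R]_n) :
  (1%:M - (Wmx C x)^T *m Theta theta) *m z = one_n R n <->
  (forall i, z i ord0 - \sum_j Wmx C x j i * theta ord0 j * z j ord0 = n%:R^-1).
Proof.
split.
  by move=> /matrixP h i; have := h i ord0; rewrite M_entry /one_n mxE.
move=> h; apply/matrixP => i j; rewrite (ord1 j) M_entry h /one_n mxE //.
Qed.

Lemma equil_eqs (R : rcfType) (n : nat) (C : 'M[R]_n) (theta : 'rV[R]_n)
   (x : 'cV[R]_n) (i0 : 'I_n) :
  row_stochastic C -> (forall i, 0 <= theta ord0 i) -> (forall i, theta ord0 i < 1) ->
  equilibrium_power C theta x -> in_simplex x /\ exists z, eqs C theta x z.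
Proof.
move=> hC th0 th1 hE.
have hS : in_simplex x by case: hE => [[]|[V [_ []]]].
split => //.
have uM := @unit_M R n C theta x i0 hC (@simplex_bnd R n x hS) th0 th1.
set M := (1%:M - (Wmx C x)^T *m Theta theta) in uM.
exists (invmx M *m one_n R n); split.
  by apply/Mz_eq; rewrite mulKVmx.
suff -> : x = (1%:M - Theta theta) *m (invmx M *m one_n R n).
  by move=> i; rewrite IT_entry.
case: hE => [[_ [_ hF]]|[V [_ [_ [hV hx]]]]].
  by rewrite -hF /Fmap mulmxA.
have hVM : V^T *m M = 1%:M - Theta theta.
  have h1 : (1%:M - Theta theta *m Wmx C x) *m V = 1%:M - Theta theta.
    by rewrite mulmxBl mul1mx {1}hV addrC addKr.
  have := congr1 trmx h1.
  rewrite trmx_mul linearB /= trmx1 trmx_mul /Theta tr_diag_mx => ->.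
  by rewrite linearB /= trmx1 tr_diag_mx.
by rewrite -hVM !mulmxA mulmxK // hx.
Qed.

Lemma eqs_equil (R : rcfType) (n : nat) (C : 'M[R]_n) (theta : 'rV[R]_n)
   (x z : 'cV[R]_n) (i0 : 'I_n) :
  row_stochastic C -> (forall i, 0 <= theta ord0 i) -> (forall i, theta ord0 i < 1) ->
  in_simplex x -> eqs C theta x z -> equilibrium_power C theta x.
Proof.
move=> hC th0 th1 hS [E1 E2]; left.
have uM := @unit_M R n C theta x i0 hC (@simplex_bnd R n x hS) th0 th1.
split => //; split => //.
have hz := proj2 (@Mz_eq R n C theta x z) E1.
rewrite /Fmap -mulmxA -hz mulKmx //.
by apply/matrixP => i j; rewrite (ord1 j) IT_entry E2.
Qed.

Lemma sumW_gen (R : rcfType) (n : nat) (C : 'M[R]_n) (theta : 'rV[R]_n)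
   (x z : 'cV[R]_n) i :
  \sum_j Wmx C x j i * theta ord0 j * z j ord0 =
  x i ord0 * theta ord0 i * z i ord0 +
  \sum_j (1 - x j ord0) * C j i * theta ord0 j * z j ord0.
Proof.
under eq_bigr => j _ do rewrite W_entry (mulrDl (x j ord0 *+ _)) mulrDl.
rewrite big_split /=; congr (_ + _).
rewrite (bigD1 i) //= eqxx mulr1n big1 ?addr0 //.
by move=> j /negbTE ->; rewrite mulr0n !mul0r.
Qed.

Lemma C_zero (R : rcfType) (n : nat) (C : 'M[R]_n) (l : 'I_n) i j :
  row_stochastic C -> star_topology C l -> i != l -> j != l -> C j i = 0.
Proof.
move=> [hC _] hs il jl; apply/eqP; rewrite eq_le hC andbT leNgt.
apply/negP => /hs [/eqP|/eqP]; by [rewrite (negbTE jl) | rewrite (negbTE il)].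
Qed.

Lemma C_to_l (R : rcfType) (n : nat) (C : 'M[R]_n) (l : 'I_n) j :
  row_stochastic C -> star_topology C l -> j != l -> C j l = 1.
Proof.
move=> hC hs jl; have [_ hr] := hC.
rewrite -(hr j) (bigD1 l) //= big1 ?addr0 // => k kl.
exact: (@C_zero R n C l k j hC hs kl jl).
Qed.

Lemma sumW_nonl (R : rcfType) (n : nat) (C : 'M[R]_n) (theta : 'rV[R]_n)
   (l : 'I_n) (x z : 'cV[R]_n) i :
  row_stochastic C -> star_topology C l -> i != l ->
  \sum_j Wmx C x j i * theta ord0 j * z j ord0 =
  x i ord0 * theta ord0 i * z i ord0 +
  (1 - x l ord0) * C l i * theta ord0 l * z l ord0.
Proof.
move=> hC hs il; rewrite sumW_gen; congr (_ + _).
rewrite (bigD1 l) //= big1 ?addr0 // => j jl.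
by rewrite (@C_zero R n C l i j hC hs il jl) mulr0 !mul0r.
Qed.

Lemma sumW_l (R : rcfType) (n : nat) (C : 'M[R]_n) (theta : 'rV[R]_n)
   (l : 'I_n) (x z : 'cV[R]_n) :
  row_stochastic C -> zero_diag C -> star_topology C l ->
  \sum_j Wmx C x j l * theta ord0 j * z j ord0 =
  x l ord0 * theta ord0 l * z l ord0 +
  \sum_(j | j != l) (1 - x j ord0) * theta ord0 j * z j ord0.
Proof.
move=> hC hZ hs; rewrite sumW_gen; congr (_ + _).
rewrite (bigD1 l) //= hZ mulr0 !mul0r add0r.
by apply: eq_bigr => j jl; rewrite (@C_to_l R n C l j hC hs jl) mulr1.
Qed.

Lemma card_split (R : rcfType) (n : nat) (theta : 'rV[R]_n) (l : 'I_n) :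
  (forall i, 0 <= theta ord0 i) -> 0 < theta ord0 l ->
  (#|[set i : 'I_n | theta ord0 i == 0]|%:R : R) +
  \sum_(j | (0 < theta ord0 j) && (j != l)) 1 + 1 = n%:R.
Proof.
move=> th0 thl.
apply/esym; transitivity (\sum_(j < n) (1 : R)); first by rewrite sumr_const card_ord.
rewrite (bigID (fun j => theta ord0 j == 0)) /=.
set S := \sum_(j | theta ord0 j != 0) _.
have -> : S = 1 + \sum_(j | (0 < theta ord0 j) && (j != l)) 1.
  rewrite /S (bigD1 l) /=; last by rewrite (gt_eqF thl).
  congr (_ + _); apply: eq_bigl => j.
  by rewrite lt0r th0 andbT.
rewrite -sum1_card natr_sum.
rewrite [X in _ = X + _ + _](eq_bigl (fun j => theta ord0 j == 0)); last by move=> j; rewrite inE.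
ring.
Qed.

Lemma root_sel (R : rcfType) (n : nat) (t s y : R) :
  (0 < n)%N -> 0 < t -> t < 1 -> y < 1 -> s < n%:R ->
  n%:R * t * y ^+ 2 - n%:R * y + (1 - t) * s = 0 -> 2%:R * t * y <= 1.
Proof.
move=> n0 t0 t1 y1 sN E.
have N0 : (0 : R) < n%:R by rewrite ltr0n.
rewrite leNgt; apply/negP => hy.
have ht : 1 < 2%:R * t.
  have y0 : 0 < y by nra.
  nra.
have f1 : n%:R * t - n%:R + (1 - t) * s < 0.
  have : (1 - t) * (s - n%:R) < 0 by rewrite pmulr_rlt0 ?subr_gt0 // subr_lt0.
  lra.
have d : 0 < n%:R * ((1 - y) * (t * (1 + y) - 1)).
  apply: mulr_gt0 => //; apply: mulr_gt0; first lra.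
  nra.
have e : n%:R * t - n%:R + (1 - t) * s =
  (n%:R * t * y ^+ 2 - n%:R * y + (1 - t) * s) +
  n%:R * ((1 - y) * (t * (1 + y) - 1)) by ring.
rewrite E add0r in e; lra.
Qed.

Lemma quad_iff (R : rcfType) (n : nat) (t x z a : R) :
  (0 < n)%N -> t < 1 -> x = (1 - t) * z ->
  (z - x * t * z = a <-> n%:R * t * x ^+ 2 - n%:R * x + (1 - t) * (n%:R * a) = 0).
Proof.
move=> n0 t1 ->.
have N0 : (n%:R : R) != 0 by rewrite pnatr_eq0 -lt0n.
have T0 : 1 - t != 0 by rewrite subr_eq0 eq_sym lt_eqF.
have e : n%:R * t * ((1 - t) * z) ^+ 2 - n%:R * ((1 - t) * z) + (1 - t) * (n%:R * a)
  = - ((1 - t) * n%:R) * (z - (1 - t) * z * t * z - a) by ring.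
rewrite e; split; first by move=> ->; rewrite subrr mulr0.
move/eqP; rewrite mulf_eq0 oppr_eq0 mulf_eq0 (negbTE N0) (negbTE T0) /=.
by rewrite subr_eq0 => /eqP.
Qed.

Lemma other_idx (n : nat) (l : 'I_n) : (2 <= n)%N -> exists k : 'I_n, k != l.
Proof.
move=> n2.
have h0 : (0 < n)%N by apply: leq_trans n2.
case: (eqVneq (val l) 0%N) => hl.
  exists (Ordinal n2); apply/eqP => /(congr1 val) /=; rewrite hl.
  by [].
exists (Ordinal h0); apply/eqP => /(congr1 val) /= h.
by move: hl; rewrite {1}h eqxx.
Qed.

Lemma part_i_basic (R : rcfType) (n : nat) (C : 'M[R]_n) (theta : 'rV[R]_n)
   (l : 'I_n) (x z : 'cV[R]_n) :
  (2 <= n)%N -> row_stochastic C ->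
  (forall i, 0 <= theta ord0 i) -> (forall i, theta ord0 i < 1) ->
  star_topology C l -> in_simplex x -> eqs C theta x z ->
  [/\ (forall i, 0 < z i ord0), (forall i, 0 < x i ord0), (forall i, x i ord0 < 1) &
   forall i, i != l -> z i ord0 - x i ord0 * theta ord0 i * z i ord0
      - (1 - x l ord0) * C l i * theta ord0 l * z l ord0 = n%:R^-1].
Proof.
move=> n2 hC th0 th1 hs hS [E1 E2].
have n0 : (0 < n)%N by apply: leq_trans n2.
have hx := @simplex_bnd R n x hS.
have zge : forall i, 0 <= z i ord0.
  move=> i; have := hx i => /andP[+ _]; rewrite E2 pmulr_rge0 // subr_gt0 //.
have zpos : forall i, 0 < z i ord0.
  move=> i; have := E1 i.
  have : 0 <= \sum_j Wmx C x j i * theta ord0 j * z j ord0.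
    apply: sumr_ge0 => j _; apply: mulr_ge0 => //; apply: mulr_ge0 => //.
    exact: W_ge0.
  have : (0 : R) < n%:R^-1 by rewrite invr_gt0 ltr0n.
  lra.
have xpos : forall i, 0 < x i ord0.
  by move=> i; rewrite E2 mulr_gt0 // subr_gt0.
split => //.
  move=> i0.
  have [k kl] := @other_idx n i0 n2.
  have [_ hsum] := hS.
  move: hsum; rewrite (bigD1 i0) //=.
  have : x k ord0 <= \sum_(j | j != i0) x j ord0.
    rewrite (bigD1 k) //= lerDl; apply: sumr_ge0 => j _; exact: ltW.
  have := xpos k; lra.
move=> i il; have := E1 i; rewrite (@sumW_nonl R n C theta l x z i hC hs il).
by rewrite opprD addrA.
Qed.

Lemma part_i (R : rcfType) (n : nat) (C : 'M[R]_n) (theta : 'rV[R]_n)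
   (l : 'I_n) (x z : 'cV[R]_n) :
  (2 <= n)%N -> row_stochastic C ->
  (forall i, 0 <= theta ord0 i) -> (forall i, theta ord0 i < 1) ->
  star_topology C l -> 0 < theta ord0 l -> in_simplex x -> eqs C theta x z ->
     in_int_simplex x /\
     (forall i, theta ord0 i = 0 ->
        (C l i = 0 -> x i ord0 = n%:R^-1) /\
        (C l i <> 0 -> n%:R^-1 < x i ord0)) /\
     (forall i, 0 < theta ord0 i -> i <> l -> C l i = 0 ->
        x i ord0 = gval n (theta ord0 i)).
Proof.
move=> n2 hC th0 th1 hs thl hS hE.
have n0 : (0 < n)%N by apply: leq_trans n2.
have [zpos xpos xlt1 Ei] := @part_i_basic R n C theta l x z n2 hC th0 th1 hs hS hE.
have [E1 E2] := hE.
split; first by split => //; case: hS.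
split.
  move=> i thi.
  have il : i != l by apply/eqP => eil; move: thl; rewrite -eil thi ltxx.
  have := Ei i il; rewrite thi mulr0 mul0r subr0.
  have -> : z i ord0 = x i ord0 by rewrite E2 thi subr0 mul1r.
  move=> h; split.
    by move=> c0; rewrite -h c0 mulr0 !mul0r subr0.
  move=> c0; rewrite -h.
  have cp : 0 < C l i by rewrite lt_neqAle eq_sym; apply/andP; split;
    [apply/eqP | case: hC => hC' _; exact: hC'].
  have : 0 < (1 - x l ord0) * C l i * theta ord0 l * z l ord0.
    apply: mulr_gt0 => //; apply: mulr_gt0 => //; apply: mulr_gt0 => //.
    by rewrite subr_gt0.
  lra.
move=> i thi il c0.
have il' : i != l by apply/eqP.
have := Ei i il'; rewrite c0 mulr0 !mul0r subr0.
move/(@quad_iff R n _ _ _ _ n0 (th1 i) (E2 i)).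
have -> : n%:R * n%:R^-1 = 1 :> R by rewrite mulfV // pnatr_eq0 -lt0n.
move=> hq; apply: root_val_uniq => //; rewrite ?mulr1 //.
apply: (@root_sel R n _ 1 _ n0 thi (th1 i) (xlt1 i)) => //.
by rewrite (ltr_nat R 1 n).
Qed.

Definition xiv (R : rcfType) (n : nat) (theta : 'rV[R]_n) (l : 'I_n) (x : 'cV[R]_n) : R :=
  n%:R - #|[set i : 'I_n | theta ord0 i == 0]|%:R
  - n%:R * \sum_(j | (0 < theta ord0 j) && (j != l)) x j ord0.
Arguments xiv {R n}.

Lemma char_ii (R : rcfType) (n : nat) (C : 'M[R]_n) (theta : 'rV[R]_n)
   (l : 'I_n) (x z : 'cV[R]_n) :
  (2 <= n)%N -> row_stochastic C -> zero_diag C ->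
  (forall i, 0 <= theta ord0 i) -> (forall i, theta ord0 i < 1) ->
  star_topology C l -> 0 < theta ord0 l ->
  (forall i, 0 < theta ord0 i -> i <> l -> C l i = 0) ->
  in_simplex x -> eqs C theta x z ->
  let xi := xiv theta l x in
  (forall i, 0 < theta ord0 i -> i <> l -> x i ord0 = gval n (theta ord0 i)) /\
  x l ord0 = root_val n (theta ord0 l) xi /\
  (forall i, theta ord0 i = 0 ->
     x i ord0 = n%:R^-1 + (xi / n%:R - x l ord0) * C l i).
Proof.
move=> n2 hC hZ th0 th1 hs thl hii hS hE xi.
have n0 : (0 < n)%N by apply: leq_trans n2.
have N0 : (n%:R : R) != 0 by rewrite pnatr_eq0 -lt0n.
have [zpos xpos xlt1 Ei] := @part_i_basic R n C theta l x z n2 hC th0 th1 hs hS hE.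
have [_ [_ hc]] := @part_i R n C theta l x z n2 hC th0 th1 hs thl hS hE.
have [E1 E2] := hE.
set P := fun j => (0 < theta ord0 j) && (j != l).
have hP : forall j, P j -> (1 - x j ord0) * theta ord0 j * z j ord0 = n%:R^-1 - x j ord0.
  move=> j /andP[tj jl].
  have := Ei j jl; rewrite (hii j tj (elimN eqP jl)) mulr0 !mul0r subr0 => h.
  have e : (1 - x j ord0) * theta ord0 j * z j ord0 =
    (z j ord0 - x j ord0 * theta ord0 j * z j ord0) - (1 - theta ord0 j) * z j ord0 by ring.
  by rewrite e h -E2.
have hsum : \sum_(j | j != l) (1 - x j ord0) * theta ord0 j * z j ord0 =
    n%:R^-1 * \sum_(j | P j) 1 - \sum_(j | P j) x j ord0.
  rewrite (bigID (fun j => theta ord0 j == 0)) /= big1; last first.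
    by move=> j /andP[_ /eqP ->]; rewrite mulr0 mul0r.
  rewrite add0r (eq_bigl P); last first.
    by move=> j; rewrite /P lt0r th0 andbT andbC.
  rewrite (eq_bigr _ hP) sumrB mulr_sumr; congr (_ - _).
  by apply: eq_bigr => j _; rewrite mulr1.
have hcard := @card_split R n theta l th0 thl.
have El : z l ord0 - x l ord0 * theta ord0 l * z l ord0 = xi / n%:R.
  have := E1 l; rewrite (@sumW_l R n C theta l x z hC hZ hs) hsum => h.
  have hr : n%:R - #|[set i : 'I_n | theta ord0 i == 0]|%:R = 1 + \sum_(j | P j) (1 : R).
    by rewrite -hcard; ring.
  have -> : xi / n%:R = n%:R^-1 + n%:R^-1 * \sum_(j | P j) 1 - \sum_(j | P j) x j ord0.
    by rewrite /xi /xiv hr; field.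
  move: h; set a := x l ord0 * _ * _; set b := \sum_(j | P j) x j ord0.
  set c := n%:R^-1 * _. lra.
have xiN : xi < n%:R.
  rewrite /xi /xiv.
  suff : 0 < #|[set i : 'I_n | theta ord0 i == 0]|%:R +
     n%:R * \sum_(j | P j) x j ord0 :> R by lra.
  case: (pickP P) => [j Pj | P0].
    apply: ltr_wpDl => //.
    apply: mulr_gt0; first by rewrite ltr0n.
    rewrite (bigD1 j) //=; apply: ltr_wpDr; last exact: xpos.
    by apply: sumr_ge0 => k _; exact: ltW.
  rewrite big_pred0 // mulr0 addr0.
  move: hcard; rewrite big_pred0 // addr0 => hc'.
  have : (2 : R) <= n%:R by rewrite (ler_nat R 2 n).
  lra.
have Hl : x l ord0 = root_val n (theta ord0 l) xi.
  move: El; move/(@quad_iff R n _ _ _ _ n0 (th1 l) (E2 l)).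
  rewrite [n%:R * (xi / _)]mulrC divfK // => hq.
  apply: root_val_uniq => //.
  exact: (@root_sel R n _ _ _ n0 thl (th1 l) (xlt1 l) xiN).
split; first by move=> i ti il; exact: hc i ti il (hii i ti il).
split => //.
move=> i thi.
have il : i != l by apply/eqP => eil; move: thl; rewrite -eil thi ltxx.
have := Ei i il; rewrite thi mulr0 mul0r subr0.
have -> : z i ord0 = x i ord0 by rewrite E2 thi subr0 mul1r.
move=> h.
have e : xi / n%:R - x l ord0 = (1 - x l ord0) * theta ord0 l * z l ord0.
  by rewrite -El E2; ring.
rewrite e -h; ring.
Qed.

Lemma exist_ii (R : rcfType) (n : nat) (C : 'M[R]_n) (theta : 'rV[R]_n)
   (l : 'I_n) :
  (2 <= n)%N -> row_stochastic C -> zero_diag C ->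
  (forall i, 0 <= theta ord0 i) -> (forall i, theta ord0 i < 1) ->
  star_topology C l -> 0 < theta ord0 l ->
  (forall i, 0 < theta ord0 i -> i <> l -> C l i = 0) ->
  exists x z : 'cV[R]_n, in_simplex x /\ eqs C theta x z.
Proof.
move=> n2 hC hZ th0 th1 hs thl hii.
have n0 : (0 < n)%N by apply: leq_trans n2.
have N0 : (n%:R : R) != 0 by rewrite pnatr_eq0 -lt0n.
have Npos : (0 : R) < n%:R by rewrite ltr0n.
have N2 : (2 : R) <= n%:R by rewrite (ler_nat R 2 n).
set P := fun j => (0 < theta ord0 j) && (j != l).
set r := #|[set i : 'I_n | theta ord0 i == 0]|.
set K := \sum_(j | P j) (1 : R).
set G := \sum_(j | P j) gval n (theta ord0 j).
set xi0 := n%:R - r%:R - n%:R * G.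
set y := root_val n (theta ord0 l) xi0.
have hcard : r%:R + K + 1 = n%:R := @card_split R n theta l th0 thl.
have gP : forall j, P j -> let g := gval n (theta ord0 j) in
   n%:R * theta ord0 j * g ^+ 2 - n%:R * g + (1 - theta ord0 j) = 0 /\
   0 < g /\ n%:R * g < 1.
  move=> j /andP[tj _] g.
  by have [? [? [? ?]]] := @gval_props R n (theta ord0 j) n2 tj (th1 j).
have xi1 : 1 <= xi0.
  have -> : xi0 = 1 + \sum_(j | P j) (1 - n%:R * gval n (theta ord0 j)).
    rewrite sumrB -mulr_sumr -/K -/G /xi0.
    have -> : n%:R - r%:R = 1 + K by rewrite -hcard; ring.
    ring.
  rewrite lerDl; apply: sumr_ge0 => j Pj.
  by have [_ [_ h]] := gP j Pj; rewrite subr_ge0 ltW.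
have xiN : xi0 < n%:R.
  rewrite /xi0.
  suff : 0 < r%:R + n%:R * G :> R by lra.
  case: (pickP P) => [j Pj | P0].
    apply: ltr_wpDl => //.
    apply: mulr_gt0 => //.
    rewrite /G (bigD1 j) //=; apply: ltr_wpDr; last by have [_ [h _]] := gP j Pj.
    by apply: sumr_ge0 => k /andP[Pk _]; have [_ [h _]] := gP k Pk; exact: ltW.
  rewrite /G big_pred0 // mulr0 addr0.
  move: hcard; rewrite /K big_pred0 // addr0 => hc'.
  lra.
have tl1 := th1 l.
have D0 : 0 <= n%:R ^+ 2 - 4%:R * n%:R * theta ord0 l * (1 - theta ord0 l) * xi0.
  have h1 : 0 <= (1 - 2 * theta ord0 l) ^+ 2 :> R by apply: sqr_ge0.
  have h2 : 4%:R * theta ord0 l * (1 - theta ord0 l) <= 1 by nra.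
  have h3 : 0 <= 4%:R * theta ord0 l * (1 - theta ord0 l) by nra.
  have h4 : 4%:R * theta ord0 l * (1 - theta ord0 l) * xi0 <= n%:R.
    have : 0 <= (1 - 4%:R * theta ord0 l * (1 - theta ord0 l)) * xi0.
      by apply: mulr_ge0; lra.
    nra.
  nra.
have [Ey ley] := @root_val_eq R n (theta ord0 l) xi0 n0 thl D0.
rewrite -/y in Ey ley.
set t := theta ord0 l in Ey ley tl1 thl.
have y0 : 0 <= y.
  have E2 : (n%:R * y) * (1 - t * y) = (1 - t) * xi0.
    by rewrite -[RHS]subr0 -Ey; ring.
  have h1 : 0 < 1 - t * y by nra.
  have h2 : 0 <= (1 - t) * xi0 by apply: mulr_ge0; lra.
  rewrite -E2 in h2.
  have : 0 <= n%:R * y by rewrite (pmulr_lge0 _ h1) in h2.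
  by rewrite pmulr_rge0.
have y1 : y < 1.
  rewrite ltNge; apply/negP => hy.
  have f1 : n%:R * t - n%:R + (1 - t) * xi0 < 0.
    have : (1 - t) * (xi0 - n%:R) < 0 by rewrite pmulr_rlt0 ?subr_gt0 // subr_lt0.
    lra.
  have d : 0 <= n%:R * ((y - 1) * (1 - t * (1 + y))).
    apply: mulr_ge0; first lra.
    apply: mulr_ge0; nra.
  have e : n%:R * t - n%:R + (1 - t) * xi0 =
    (n%:R * t * y ^+ 2 - n%:R * y + (1 - t) * xi0) +
    n%:R * ((y - 1) * (1 - t * (1 + y))) by ring.
  rewrite Ey add0r in e; lra.
have dxy : 0 <= xi0 / n%:R - y.
  have e : (1 - t) * (xi0 / n%:R - y) = t * y * (1 - y).
    by apply: (mulfI N0); rewrite -[LHS]subr0 -Ey; field.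
  have : 0 <= (1 - t) * (xi0 / n%:R - y).
    by rewrite e; apply: mulr_ge0; [apply: mulr_ge0; lra | lra].
  by rewrite pmulr_rge0 // subr_gt0.
set x0 : 'cV[R]_n := \col_i (if P i then gval n (theta ord0 i) else
   if i == l then y else n%:R^-1 + (xi0 / n%:R - y) * C l i).
set z0 : 'cV[R]_n := \col_i (x0 i ord0 / (1 - theta ord0 i)).
have T0 : forall i, 1 - theta ord0 i != 0.
  by move=> i; rewrite subr_eq0 eq_sym lt_eqF.
have E2 : forall i, x0 i ord0 = (1 - theta ord0 i) * z0 i ord0.
  by move=> i; rewrite [z0 i ord0]mxE mulrC divfK.
have x0l : x0 l ord0 = y.
  rewrite mxE; have -> : P l = false by rewrite /P eqxx andbF.
  by rewrite eqxx.
have x0P : forall j, P j -> x0 j ord0 = gval n (theta ord0 j).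
  by move=> j Pj; rewrite mxE Pj.
have zP : forall j, P j ->
   z0 j ord0 - x0 j ord0 * theta ord0 j * z0 j ord0 = n%:R^-1.
  move=> j Pj; apply/(@quad_iff R n _ _ _ _ n0 (th1 j) (E2 j)).
  rewrite mulfV // mulr1 x0P //; by have [h _] := gP j Pj.
have zl : z0 l ord0 - x0 l ord0 * t * z0 l ord0 = xi0 / n%:R.
  apply/(@quad_iff R n _ _ _ _ n0 (th1 l) (E2 l)).
  by rewrite x0l [n%:R * (xi0 / _)]mulrC divfK.
have hP : forall j, P j ->
   (1 - x0 j ord0) * theta ord0 j * z0 j ord0 = n%:R^-1 - x0 j ord0.
  move=> j Pj.
  have e : (1 - x0 j ord0) * theta ord0 j * z0 j ord0 =
    (z0 j ord0 - x0 j ord0 * theta ord0 j * z0 j ord0) - (1 - theta ord0 j) * z0 j ord0 by ring.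
  by rewrite e zP // -E2.
have hsum : \sum_(j | j != l) (1 - x0 j ord0) * theta ord0 j * z0 j ord0 =
    n%:R^-1 * K - G.
  rewrite (bigID (fun j => theta ord0 j == 0)) /= big1; last first.
    by move=> j /andP[_ /eqP ->]; rewrite mulr0 mul0r.
  rewrite add0r (eq_bigl P); last first.
    by move=> j; rewrite /P lt0r th0 andbT andbC.
  rewrite (eq_bigr _ hP) sumrB mulr_sumr; congr (_ - _).
    by apply: eq_bigr => j _; rewrite mulr1.
  by apply: eq_bigr => j Pj; rewrite x0P.
have hE : eqs C theta x0 z0.
  split => // i.
  case: (eqVneq i l) => [->|il].
    rewrite (@sumW_l R n C theta l x0 z0 hC hZ hs) hsum.
    have hr : n%:R - r%:R = 1 + K by rewrite -hcard; ring.
    have : xi0 / n%:R = n%:R^-1 + n%:R^-1 * K - G.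
      by rewrite /xi0 hr; field.
    move: zl; rewrite -/t; lra.
  rewrite (@sumW_nonl R n C theta l x0 z0 i hC hs il).
  case Pi: (P i).
    rewrite hii; first by rewrite mulr0 !mul0r addr0; exact: zP.
      by case/andP: Pi.
    by case/andP: Pi => _ /eqP.
  have thi : theta ord0 i = 0.
    apply/eqP; rewrite eq_le th0 andbT leNgt; apply/negP => ti.
    by move: Pi; rewrite /P ti il.
  have -> : z0 i ord0 = x0 i ord0 by rewrite E2 thi subr0 mul1r.
  rewrite thi mulr0 mul0r add0r x0l.
  rewrite [x0 i ord0]mxE Pi (negbTE il).
  have e : xi0 / n%:R - y = (1 - y) * t * z0 l ord0.
    have hy : y = (1 - t) * z0 l ord0 by rewrite -x0l E2.
    by rewrite -zl x0l hy; ring.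
  rewrite e -/t; ring.
exists x0, z0; split => //.
split; last first.
  rewrite -(@sumeq1 R n C theta x0 z0 n0 hC (proj1 hE)).
  by apply: eq_bigr => i _; rewrite E2.
move=> i; rewrite mxE; case Pi: (P i).
  by have [_ [h _]] := gP i Pi; exact: ltW.
case: eqP => // _.
apply: addr_ge0; first by rewrite invr_ge0 ltW.
by apply: mulr_ge0 => //; case: hC => hC' _; exact: hC'.
Qed.

Theorem theorem3 (R : rcfType) (n : nat) (C : 'M[R]_n) (theta : 'rV[R]_n)
    (l : 'I_n) :
  (2 <= n)%N ->
  row_stochastic C -> zero_diag C ->
  (forall i, 0 <= theta ord0 i <= 1) ->
  (forall i, theta ord0 i < 1) ->
  (exists j, 0 < theta ord0 j) ->
  star_topology C l ->
  0 < theta ord0 l < 1 ->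
  (* (i) *)
  (forall x : 'cV[R]_n, equilibrium_power C theta x ->
     (* (a) *)
     in_int_simplex x /\
     (* (b) *)
     (forall i, theta ord0 i = 0 ->
        (C l i = 0 -> x i ord0 = n%:R^-1) /\
        (C l i <> 0 -> n%:R^-1 < x i ord0)) /\
     (* (c) *)
     (forall i, 0 < theta ord0 i -> i <> l -> C l i = 0 ->
        x i ord0 = gval n (theta ord0 i))) /\
  (* monotonicity of the value in (i)(c) and (ii)(a) *)
  (forall t1 t2 : R, 0 < t1 -> t1 < t2 -> t2 < 1 -> gval n t2 < gval n t1) /\
  (* (ii) *)
  ((forall i, 0 < theta ord0 i -> i <> l -> C l i = 0) ->
     exists x : 'cV[R]_n,
       equilibrium_power C theta x /\
       (forall y, equilibrium_power C theta y -> y = x) /\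
       let r := #|[set i : 'I_n | theta ord0 i == 0]| in
       let xi := n%:R - r%:R
                 - n%:R * \sum_(j | (0 < theta ord0 j) && (j != l)) x j ord0 in
       (* (a) *)
       (forall i, 0 < theta ord0 i -> i <> l -> x i ord0 = gval n (theta ord0 i)) /\
       (* (b) *)
       x l ord0 = root_val n (theta ord0 l) xi /\
       (* (c) *)
       (forall i, theta ord0 i = 0 ->
          x i ord0 = n%:R^-1 + (xi / n%:R - x l ord0) * C l i)).
Proof.
move=> n2 hC hZ hth th1 _ hs /andP[thl _].
have th0 : forall i, 0 <= theta ord0 i by move=> i; case/andP: (hth i).
split.
  move=> x hE.
  have [hS [z hz]] := @equil_eqs R n C theta x l hC th0 th1 hE.
  exact: (@part_i R n C theta l x z n2 hC th0 th1 hs thl hS hz).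
split.
  by move=> t1 t2 h1 h12 h2; exact: (@gval_mono R n t1 t2 n2 h1 h12 h2).
move=> hii.
have [x0 [z0 [hS hz]]] := @exist_ii R n C theta l n2 hC hZ th0 th1 hs thl hii.
exists x0; split; first exact: (@eqs_equil R n C theta x0 z0 l hC th0 th1 hS hz).
have [ha [hb hc]] := @char_ii R n C theta l x0 z0 n2 hC hZ th0 th1 hs thl hii hS hz.
split; last first.
  move=> r xi.
  exact: (conj ha (conj hb hc)).
move=> y hy.
have [hSy [zy hzy]] := @equil_eqs R n C theta y l hC th0 th1 hy.
have [ya [yb yc]] := @char_ii R n C theta l y zy n2 hC hZ th0 th1 hs thl hii hSy hzy.
have exi : xiv theta l y = xiv theta l x0.
  rewrite /xiv; congr (_ - _ * _); apply: eq_bigr => j /andP[tj jl].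
  by rewrite ya ?ha //; apply/eqP.
have el : y l ord0 = x0 l ord0 by rewrite yb hb exi.
apply/matrixP => i j; rewrite (ord1 j).
case: (eqVneq i l) => [->|il] //.
have [ti|] := boolP (0 < theta ord0 i).
  by rewrite ya ?ha //; apply/eqP.
rewrite lt0r th0 andbT negbK => /eqP ti.
by rewrite yc // hc // exi el.
Qed.
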